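(* Let $\Sigma$ be a finite alphabet with $k=|\Sigma|$, and let $h:\Sigma\to\{1,\dots,k\}$ be a fixed bijection. Two NFAs $\mathcal{A}_1$ and $\mathcal{A}_2$ over $\Sigma$ are isomorphic if and only if the directed graphs $G_{\mathcal{A}_1}$ and $G_{\mathcal{A}_2}$ are isomorphic.
   Context: An NFA over $\Sigma$ is a tuple $(Q,\Sigma,\Delta,I,F)$ with $Q$ finite, $\Delta\subseteq Q\times\Sigma\times Q$, $I,F\subseteq Q$. Two NFAs are isomorphic if there is a bijection $\varphi$ between their state sets mapping initial states onto initial states, final states onto final states, and with $(p,a,q)\in\Delta_1\iff(\varphi(p),a,\varphi(q))\in\Delta_2$. For $\mathcal{A}=(Q,\Sigma,\Delta,I,F)$, the directed graph (loops allowed) $G_\mathcal{A}=(V,E)$ has as vertex set the disjoint union of: $Q$; $\Delta$ (each transition is a vertex); the vertices $(q,i)$ for $q\in I\setminus F$, $1\le i\le k+1$, for $q\in F\setminus I$, $1\le i\le k+2$, and for $q\in I\cap F$, $1\le i\le k+3$; and the vertices $(t,i)$ for $t=(p,a,q)\in\Delta$, $1\le i\le h(a)$. Its edges are: $(p,t)$ and $(t,q)$ for each $t=(p,a,q)\in\Delta$; $(t,(t,1))$ for each $t\in\Delta$; $((t,i),(t,j))$ for all $t=(p,a,q)\in\Delta$ and all $1\le i,j\le h(a)$; $((q,i),(q,j))$ for all $q\in I\cup F$ and all $i,j$ in the range given for $q$ above; and $(q,(q,1))$ for each $q\in I\cup F$. Two directed graphs are isomorphic if there is a bijection of vertex sets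 preserving edges in both directions. *)

(* Defs.v *)
From mathcomp Require Import all_boot.
Set Implicit Arguments. Unset Strict Implicit. Unset Printing Implicit Defensive.

Record nfa (Sigma Q : finType) := NFA {
  delta : {set Q * Sigma * Q};
  init  : {set Q};
  final : {set Q} }.

Definition nfa_iso (Sigma Q1 Q2 : finType) (A1 : nfa Sigma Q1) (A2 : nfa Sigma Q2) : Prop :=
  exists phi : Q1 -> Q2,
    [/\ bijective phi,
        (forall q, (q \in init A1) = (phi q \in init A2)),
        (forall q, (q \in final A1) = (phi q \in final A2)) &
        (forall p a q, ((p, a, q) \in delta A1) = ((phi p, a, phi q) \in delta A2))].

Record digraph := Digraph {
  amb : eqType;
  vert : pred amb;
  edge : rel amb }.
Arguments vert : clear implicits.
Arguments edge : clear implicits.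

Definition digraph_iso (G1 G2 : digraph) : Prop :=
  exists phi : amb G1 -> amb G2,
    [/\ (forall x, vert G1 x -> vert G2 (phi x)),
        {in vert G1 &, injective phi},
        (forall y, vert G2 y -> exists2 x, vert G1 x & phi x = y) &
        (forall x y, vert G1 x -> vert G1 y -> edge G1 x y = edge G2 (phi x) (phi y))].

Section GraphOfNFA.
Variables (Sigma Q : finType) (h : Sigma -> nat) (A : nfa Sigma Q).

(* ambient type: Q + Delta-candidates + (q,i) + (t,i) *)
Definition gvtx : eqType :=
  (Q + ((Q * Sigma * Q) + ((Q * nat) + ((Q * Sigma * Q) * nat))))%type.

Let k := #|Sigma|.

(* number of extra vertices (q,i) attached to a state q *)
Definition qbound (q : Q) : nat :=
  if q \in init A then (if q \in final A then k + 3 else k + 1)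
  else (if q \in final A then k + 2 else 0).

Definition gvert (v : gvtx) : bool :=
  match v with
  | inl _ => true
  | inr (inl t) => t \in delta A
  | inr (inr (inl (q, i))) => (1 <= i <= qbound q)
  | inr (inr (inr (t, i))) => (t \in delta A) && (1 <= i <= h t.1.2)
  end.

Definition gedge0 (v w : gvtx) : bool :=
  match v, w with
  (* (p, t) for t = (p,a,q) in Delta *)
  | inl p, inr (inl t) => (t \in delta A) && (t.1.1 == p)
  (* (t, q) for t = (p,a,q) in Delta *)
  | inr (inl t), inl q => (t \in delta A) && (t.2 == q)
  (* (t, (t,1)) *)
  | inr (inl t), inr (inr (inr (t', i))) => (t \in delta A) && (t' == t) && (i == 1)
  (* ((t,i),(t,j)) *)
  | inr (inr (inr (t, i))), inr (inr (inr (t', j))) =>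
      [&& t \in delta A, t' == t, 1 <= i <= h t.1.2 & 1 <= j <= h t.1.2]
  (* ((q,i),(q,j)) for q in I u F *)
  | inr (inr (inl (q, i))), inr (inr (inl (q', j))) =>
      [&& (q \in init A) || (q \in final A), q' == q,
          1 <= i <= qbound q & 1 <= j <= qbound q]
  (* (q, (q,1)) for q in I u F *)
  | inl q, inr (inr (inl (q', i))) =>
      [&& (q \in init A) || (q \in final A), q' == q & i == 1]
  | _, _ => false
  end.

Definition gedge (v w : gvtx) : bool := [&& gvert v, gvert w & gedge0 v w].

Definition graph_of_nfa : digraph := @Digraph gvtx gvert gedge.

End GraphOfNFA.

(* Main.v *)
Require Import Defs.
From mathcomp Require Import all_boot.
From mathcomp Require Import zify.
Set Implicit Arguments. Unset Strict Implicit. Unset Printing Implicit Defensive.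

Definition atleast (G : digraph) (n : nat) (w : amb G) : Prop :=
  exists s : seq (amb G), [/\ uniq s, n <= size s & all (edge G w) s].
Arguments atleast : clear implicits.
Definition statev (G : digraph) (k : nat) (v : amb G) : Prop :=
  ~~ edge G v v /\ forall w, edge G v w -> edge G w w -> atleast G (k.+1) w.
Arguments statev : clear implicits.
Definition pn (G : digraph) (n : nat) (v : amb G) : Prop :=
  exists w, [/\ edge G v w, edge G w w & atleast G n w].

Arguments pn : clear implicits.
Section Gen.
Variables (G1 G2 : digraph) (f : amb G1 -> amb G2).
Hypothesis Hv : forall x, vert G1 x -> vert G2 (f x).
Hypothesis Hi : {in vert G1 &, injective f}.
Hypothesis Hs : forall y, vert G2 y -> exists2 x, vert G1 x & f x = y.
Hypothesis He : forall x y, vert G1 x -> vert G1 y -> edge G1 x y = edge G2 (f x) (f y).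
Hypothesis E1 : forall x y, edge G1 x y -> vert G1 y.
Hypothesis E2 : forall x y, edge G2 x y -> vert G2 y.

Lemma pull (s2 : seq (amb G2)) : all (vert G2) s2 ->
  exists s1, all (vert G1) s1 /\ map f s1 = s2.
Proof using Hv Hi Hs He E1 E2.
elim: s2 => [|y s IH] /=; first by exists [::].
case/andP=> vy /IH [s1 [a1 e1]].
have [x vx fx] := Hs vy.
by exists (x :: s1); rewrite /= vx a1 fx e1.
Qed.

Lemma loop_iso v : vert G1 v -> edge G1 v v = edge G2 (f v) (f v).
Proof using Hv Hi Hs He E1 E2. by move=> vv; rewrite He. Qed.

Lemma atleast_iso n w : vert G1 w -> atleast G1 n w <-> atleast G2 n (f w).
Proof using Hv Hi Hs He E1 E2.
move=> vw; split.
- case=> s [us ns as1]; exists (map f s); split.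
  + rewrite map_inj_in_uniq // => x y xs ys; apply: Hi.
    * exact: (E1 (allP as1 x xs)).
    * exact: (E1 (allP as1 y ys)).
  + by rewrite size_map.
  + apply/allP => y /mapP [x xs ->]; rewrite -He //; first exact: (allP as1 x xs).
    exact: (E1 (allP as1 x xs)).
- case=> s [us ns as2].
  have [s1 [a1 e1]] : exists s1, all (vert G1) s1 /\ map f s1 = s.
    apply: pull; apply/allP => y ys; exact: (E2 (allP as2 y ys)).
  exists s1; split.
  + by apply: (@map_uniq _ _ f); rewrite e1.
  + by rewrite -(size_map f) e1.
  + apply/allP => x xs; rewrite He //; last exact: (allP a1 x xs).
    by apply: (allP as2); rewrite -e1; apply: map_f.
Qed.

Lemma statev_iso k v : vert G1 v -> statev G1 k v <-> statev G2 k (f v).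
Proof using Hv Hi Hs He E1 E2.
move=> vv; rewrite /statev loop_iso //; split=> -[nl H]; split=> // w.
- move=> ew lw; have [x vx fx] := Hs (E2 ew); subst w.
  rewrite -He // in ew; rewrite -He // in lw.
  by apply/atleast_iso => //; apply: H.
- move=> ew lw; have vw := E1 ew.
  rewrite He // in ew; rewrite He // in lw.
  by apply/atleast_iso => //; apply: H.
Qed.

Lemma pn_iso n v : vert G1 v -> pn G1 n v <-> pn G2 n (f v).
Proof using Hv Hi Hs He E1 E2.
move=> vv; split.
- case=> w [ew lw aw]; have vw := E1 ew.
  exists (f w); rewrite -!He //; split => //; exact/atleast_iso.
- case=> w [ew lw aw]; have [x vx fx] := Hs (E2 ew); subst w.
  exists x; rewrite !He //; split => //; exact/atleast_iso.
Qed.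
End Gen.

Lemma atleast_list (G : digraph) (w : amb G) (L : seq (amb G)) n :
  uniq L -> (forall x, edge G w x = (x \in L)) -> atleast G n w <-> n <= size L.
Proof.
move=> uL HL; split.
- case=> s [us ns as1]; apply: (leq_trans ns); apply: uniq_leq_size => // x xs.
  by rewrite -HL; apply: (allP as1).
- move=> nL; exists L; split => //; apply/allP => x xL; by rewrite HL.
Qed.

Section Conc.
Variables (Sigma Q : finType) (h : Sigma -> nat) (A : nfa Sigma Q).
Hypothesis h_range : forall a, 1 <= h a <= #|Sigma|.
Local Notation k := #|Sigma|.
Local Notation G := (graph_of_nfa h A).
Definition vq (q : Q) (i : nat) : gvtx Sigma Q := inr (inr (inl (q, i))).
Definition vt (t : Q * Sigma * Q) (i : nat) : gvtx Sigma Q := inr (inr (inr (t, i))).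

Lemma gedge_vert x y : gedge h A x y -> gvert h A y.
Proof. by case/and3P. Qed.

Lemma qbound_pos q : (0 < qbound A q) = (q \in init A) || (q \in final A).
Proof. rewrite /qbound; case: (q \in init A); case: (q \in final A) => //=; lia. Qed.

Lemma qbound_big q : (q \in init A) || (q \in final A) -> k.+1 <= qbound A q.
Proof. rewrite /qbound; case: (q \in init A); case: (q \in final A) => //=; lia. Qed.

Lemma loopE v : gvert h A v ->
  gedge h A v v = (match v with inr (inr _) => true | _ => false end).
Proof.
case: v => [q|[t|[[q i]|[t i]]]] /= Hv; rewrite /gedge /= ?eqxx ?andbF //.
- case/andP: Hv => H1 H2; rewrite H1 H2 /= !andbT -qbound_pos; lia.
- by case/and3P: Hv => -> -> ->.
Qed.

Lemma nbrs_q q : (q \in init A) || (q \in final A) ->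
  forall x, gedge h A (vq q 1) x = (x \in map (vq q) (iota 1 (qbound A q))).
Proof.
move=> Hq x; have qb := qbound_big Hq.
case: x => [q'|[t|[[q' j]|[t j]]]]; rewrite /gedge /=;
  rewrite ?andbF; try (by apply/esym/mapP => -[? _ E]; discriminate E).
apply/idP/mapP.
- move=> /and5P[_ _ _ /eqP-> /and3P[_ H1 H2]]; exists j => //.
  by rewrite mem_iota; lia.
- case=> j'; rewrite mem_iota => Hj [-> ->]; rewrite eqxx Hq /=; lia.
Qed.

Lemma nbrs_t t : t \in delta A ->
  forall x, gedge h A (vt t 1) x = (x \in map (vt t) (iota 1 (h t.1.2))).
Proof.
move=> Ht x; have hr := h_range t.1.2.
case: x => [q'|[t'|[[q' j]|[t' j]]]]; rewrite /gedge /=;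
  rewrite ?andbF; try (by apply/esym/mapP => -[? _ E]; discriminate E).
apply/idP/mapP.
- move=> /and4P[_ _ _ /and4P[/eqP-> _ H1 H2]]; exists j => //.
  by rewrite mem_iota; lia.
- case=> j'; rewrite mem_iota => Hj [-> ->]; rewrite eqxx Ht /=; lia.
Qed.

Lemma atleast_q q n : (q \in init A) || (q \in final A) ->
  atleast G n (vq q 1) <-> n <= qbound A q.
Proof.
move=> Hq; rewrite (@atleast_list G (vq q 1) (map (vq q) (iota 1 (qbound A q)))).
- by rewrite size_map size_iota.
- by rewrite map_inj_uniq ?iota_uniq // => i j [->].
- exact: nbrs_q.
Qed.

Lemma atleast_t t n : t \in delta A ->
  atleast G n (vt t 1) <-> n <= h t.1.2.
Proof.
move=> Ht; rewrite (@atleast_list G (vt t 1) (map (vt t) (iota 1 (h t.1.2)))).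
- by rewrite size_map size_iota.
- by rewrite map_inj_uniq ?iota_uniq // => i j [->].
- exact: nbrs_t.
Qed.

Lemma trans_loop t w : t \in delta A -> gedge h A (inr (inl t)) w -> gedge h A w w ->
  w = vt t 1.
Proof.
move=> Ht ew lw; have vw := gedge_vert ew; rewrite loopE // in lw.
case: w ew lw vw => [q'|[t'|[[q' j]|[t' j]]]] //= /and3P[_ _ H] _ _; move: H => //=.
by move=> /andP[/andP[_ /eqP->] /eqP->].
Qed.

Lemma state_loop q w : gedge h A (inl q) w -> gedge h A w w ->
  (q \in init A) || (q \in final A) /\ w = vq q 1.
Proof.
move=> ew lw; have vw := gedge_vert ew; rewrite loopE // in lw.
case: w ew lw vw => [q'|[t'|[[q' j]|[t' j]]]] //= /and3P[_ _ H] _ _; move: H => //=.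
by move=> /and3P[-> /eqP-> /eqP->].
Qed.

Lemma statevE v : gvert h A v ->
  statev G k v <-> (if v is inl _ then True else False).
Proof.
move=> Hv; split.
- case=> nl H; case: v Hv nl H => [q|[t|[[q i]|[t i]]]] //= Hv.
  + move=> _ H; have hr := h_range t.1.2.
    have e1 : gedge h A (inr (inl t)) (vt t 1).
      by rewrite /gedge /= Hv !eqxx /= andbT; case/andP: hr.
    have l1 : gedge h A (vt t 1) (vt t 1) by rewrite loopE //= Hv /=; case/andP: hr.
    by move: (H _ e1 l1); rewrite atleast_t // ltnNge; case/andP: hr => _ ->.
  + by rewrite loopE.
  + by rewrite loopE.
- case: v Hv => // q _ _; split; first by rewrite /gedge /=.
  move=> w ew lw; have [Hq ->] := state_loop ew lw.
  rewrite atleast_q //; exact: qbound_big.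
Qed.

Lemma pnE q n : 0 < n -> pn G n (inl q) <-> n <= qbound A q.
Proof.
move=> n0; split.
- case=> w [ew lw aw]; have [Hq ew'] := state_loop ew lw; subst w.
  by rewrite atleast_q in aw.
- move=> nq; have Hq : (q \in init A) || (q \in final A) by rewrite -qbound_pos; lia.
  exists (vq q 1); split; last by apply/atleast_q.
  + by rewrite /= /gedge /vq /= Hq !eqxx /= andbT; lia.
  + by rewrite /= loopE //=; lia.
Qed.

End Conc.

Definition mt (Sigma Q1 Q2 : finType) (phi : Q1 -> Q2) (t : Q1 * Sigma * Q1) : Q2 * Sigma * Q2 :=
  (phi t.1.1, t.1.2, phi t.2).

Definition mapv (Sigma Q1 Q2 : finType) (phi : Q1 -> Q2) (v : gvtx Sigma Q1) : gvtx Sigma Q2 :=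
  match v with
  | inl q => inl (phi q)
  | inr (inl t) => inr (inl (mt phi t))
  | inr (inr (inl (q, i))) => inr (inr (inl (phi q, i)))
  | inr (inr (inr (t, i))) => inr (inr (inr (mt phi t, i)))
  end.

Lemma mt_can (Sigma Q1 Q2 : finType) (phi : Q1 -> Q2) psi :
  cancel phi psi -> cancel (@mt Sigma _ _ phi) (mt psi).
Proof. by move=> c [[p a] q]; rewrite /mt /= !c. Qed.

Lemma mapv_can (Sigma Q1 Q2 : finType) (phi : Q1 -> Q2) psi :
  cancel phi psi -> cancel (@mapv Sigma _ _ phi) (mapv psi).
Proof.
move=> c [q|[t|[[q i]|[t i]]]] /=; by rewrite ?c ?(mt_can c).
Qed.

Section Fwd.
Variables (Sigma Q1 Q2 : finType) (h : Sigma -> nat) (A1 : nfa Sigma Q1) (A2 : nfa Sigma Q2).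
Variable phi : Q1 -> Q2.
Hypothesis phi_inj : injective phi.
Hypothesis HI : forall q, (q \in init A1) = (phi q \in init A2).
Hypothesis HF : forall q, (q \in final A1) = (phi q \in final A2).
Hypothesis HD : forall p a q, ((p, a, q) \in delta A1) = ((phi p, a, phi q) \in delta A2).

Lemma mt_inj : injective (@mt Sigma _ _ phi).
Proof. by move=> [[p a] q] [[p' a'] q'] [/phi_inj -> -> /phi_inj ->]. Qed.

Lemma mt_delta t : (mt phi t \in delta A2) = (t \in delta A1).
Proof. by case: t => [[p a] q]; rewrite HD. Qed.

Lemma qbound_map q : qbound A2 (phi q) = qbound A1 q.
Proof. by rewrite /qbound -HI -HF. Qed.

Lemma gvert_map v : gvert h A2 (mapv phi v) = gvert h A1 v.
Proof.
by case: v => [q|[t|[[q i]|[t i]]]] /=; rewrite ?mt_delta ?qbound_map.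
Qed.

Lemma gedge_map v w : gedge h A2 (mapv phi v) (mapv phi w) = gedge h A1 v w.
Proof.
rewrite /gedge !gvert_map; congr [&& _, _ & _].
case: v => [q|[t|[[q i]|[t i]]]]; case: w => [q'|[t'|[[q' j]|[t' j]]]] /=;
  by rewrite ?mt_delta ?(inj_eq phi_inj) ?(inj_eq mt_inj) ?qbound_map -?HI -?HF.
Qed.
End Fwd.

Lemma nat_eq_from a b : (forall n, 0 < n -> (n <= a <-> n <= b)) -> a = b.
Proof.
move=> H; apply/eqP; rewrite eqn_leq; apply/andP; split.
- case: a H => // a H; by apply/H.
- case: b H => // b H; by apply/H.
Qed.

Lemma qbound_iff (Sigma Q1 Q2 : finType) (A1 : nfa Sigma Q1) (A2 : nfa Sigma Q2) q1 q2 :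
  qbound A1 q1 = qbound A2 q2 ->
  ((q1 \in init A1) = (q2 \in init A2)) /\ ((q1 \in final A1) = (q2 \in final A2)).
Proof.
rewrite /qbound; case: (q1 \in init A1); case: (q1 \in final A1);
  case: (q2 \in init A2); case: (q2 \in final A2) => //= E; exfalso; lia.
Qed.

Unset Implicit Arguments.
Theorem proposition4 (Sigma : finType) (h : Sigma -> nat)
  (h_range : forall a, 1 <= h a <= #|Sigma|)
  (h_inj : injective h)
  (h_surj : forall n, 1 <= n <= #|Sigma| -> exists a, h a = n)
  (Q1 Q2 : finType) (A1 : nfa Sigma Q1) (A2 : nfa Sigma Q2) :
  nfa_iso A1 A2 <-> digraph_iso (graph_of_nfa h A1) (graph_of_nfa h A2).
Proof.
split.
- case=> phi [bij HI HF HD]; have phi_inj := bij_inj bij.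
  case: bij => psi c1 c2.
  exists (mapv phi); split.
  + by move=> x vx; rewrite /= (gvert_map h HI HF HD).
  + move=> x y _ _; exact: (can_inj (mapv_can c1)).
  + move=> y vy; exists (mapv psi y); last exact: (mapv_can c2).
    by rewrite /= -(gvert_map h HI HF HD) (mapv_can c2).
  + by move=> x y _ _; rewrite /= (gedge_map h phi_inj HI HF HD).
- case=> f [Hv Hi Hs He].
  pose G1 := graph_of_nfa h A1; pose G2 := graph_of_nfa h A2.
  have E1 : forall x y, edge G1 x y -> vert G1 y := fun x y => @gedge_vert _ _ h A1 x y.
  have E2 : forall x y, edge G2 x y -> vert G2 y := fun x y => @gedge_vert _ _ h A2 x y.
  have stI := statev_iso Hv Hi Hs He E1 E2.
  have atI := atleast_iso Hv Hi Hs He E1 E2.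
  have pnI := pn_iso Hv Hi Hs He E1 E2.
  have loI := loop_iso Hv Hi Hs He E1 E2.
  have Hst : forall q1 : Q1, exists q2, f (inl q1) == inl q2.
    move=> q1; have vq : vert G1 (inl q1) by [].
    have : statev G1 #|Sigma| (inl q1) by apply/(statevE h_range).
    move/(stI _ _ vq)/(statevE h_range (Hv _ vq)).
    by case: (f (inl q1)) => // q2 _; exists q2.
  have [phi Hf] := fin_all_exists Hst.
  have {}Hf : forall q, f (inl q) = inl (phi q) by move=> q; apply/eqP.
  have phi_inj : injective phi.
    move=> q q' E; have : f (inl q) = f (inl q') by rewrite !Hf E.
    by move/Hi => /(_ isT isT) [].
  have Hsur : forall q2, exists q1, phi q1 = q2.
    move=> q2; have [x vx fx] := Hs (inl q2) isT.
    have : statev G2 #|Sigma| (f x) by rewrite fx; apply/(statevE h_range).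
    move/(stI _ _ vx)/(statevE h_range vx).
    case: x vx fx => // q1 _; rewrite Hf => -[<-] _; by exists q1.
  have [psi Hpsi] := fin_all_exists Hsur.
  have Hqb : forall q, qbound A1 q = qbound A2 (phi q).
    move=> q; apply: nat_eq_from => n n0.
    rewrite -(pnE h A1 q n0) -(pnE h A2 (phi q) n0) -Hf; exact: pnI.
  have Ftr : forall t, t \in delta A1 ->
      f (inr (inl t)) = inr (inl (mt phi t)).
    move=> t Ht; set x : gvtx Sigma Q1 := inr (inl t).
    have vx : vert G1 x by [].
    have nl : ~~ edge G2 (f x) (f x) by rewrite -(loI _ vx) /x /= /gedge /= ?andbF.
    have ns : ~ statev G2 #|Sigma| (f x).
      move=> H; have := proj2 (stI _ _ vx) H; move/(statevE h_range vx); by rewrite /x.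
    have vfx := Hv _ vx.
    case Efx : (f x) nl ns vfx => [q2|[t'|w]] nl ns vfx.
    + by exfalso; apply: ns; apply/(statevE h_range).
    + have Ht' : t' \in delta A2 by [].
      have e1 : edge G1 (inl t.1.1) x by rewrite /= /gedge /= Ht eqxx.
      have e2 : edge G1 x (inl t.2) by rewrite /= /gedge /= Ht eqxx.
      move: e1; rewrite He // Hf Efx /= /gedge /= Ht' /= => /eqP src.
      move: e2; rewrite He // Hf Efx /= /gedge /= Ht' /= => /eqP tgt.
      have hr := h_range t.1.2.
      have e3 : edge G1 x (vt t 1) by rewrite /= /gedge /= Ht !eqxx /= andbT; case/andP: hr.
      have l3 : edge G1 (vt t 1) (vt t 1) by rewrite /= loopE //= Ht; case/andP: hr.
      have v3 : vert G1 (vt t 1) := E1 _ _ e3.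
      rewrite He // Efx in e3; rewrite loI // in l3.
      have E3 := trans_loop Ht' e3 l3.
      have Hh : h t.1.2 = h t'.1.2.
        apply: nat_eq_from => n _.
        rewrite -(atleast_t h_range n Ht) -(atleast_t h_range n Ht') -E3.
        exact: atI.
      have Ha := h_inj _ _ Hh.
      by rewrite /mt -src -tgt Ha -[(t'.1.1, t'.1.2)]surjective_pairing -surjective_pairing.
    + by move: nl; rewrite /G2 /= loopE //; case: (w).
  exists phi.
  have bij : bijective phi.
    exists psi => q; last exact: Hpsi.
    by apply: phi_inj; rewrite Hpsi.
  split => //.
  + by move=> q; have [-> _] := qbound_iff (Hqb q).
  + by move=> q; have [_ ->] := qbound_iff (Hqb q).
  + move=> p a q; apply/idP/idP => H.
    * have E := Ftr _ H; have := Hv (inr (inl (p, a, q))) H; by rewrite E.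
    * have [x vx fx] := Hs (inr (inl (phi p, a, phi q))) H.
      case: x vx fx => [q1|[t|w]] vx fx.
      -- by rewrite Hf in fx.
      -- rewrite Ftr // in fx; case: t vx fx => [[p1 a1] q1] vx.
         rewrite /mt /= => -[/phi_inj e1 e2 /phi_inj e3].
         by rewrite -e1 -e2 -e3.
      -- have Lw : edge G1 (inr (inr w)) (inr (inr w)) by rewrite /G1 /= (loopE vx).
         rewrite loI // fx in Lw; move: Lw; by rewrite /= /gedge /= !andbF.
Qed.
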